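(* Let $\mathcal M\subset \mathcal M_n(\mathbb R)$ be a compact convex set of irreducible Metzler matrices. Then $\lambda(\mathcal M)\ge\lambda(m)$ for every $m\in\mathcal M$, where $\lambda(m)$ is the Perron (dominant) eigenvalue of $m$.
   Context: A matrix is Metzler if its off-diagonal entries are nonnegative; it is irreducible if for every partition $\{1,\dots,n\}=I\sqcup J$ into nonempty sets some $m_{ij}$ with $i\in I$, $j\in J$ is positive. $K$ is the nonnegative orthant, $K_0=K\setminus\{0\}$. For $t>0$, $L^\infty(0,t)$ is the set of measurable controls $M:[0,t]\to\mathcal M$ and $x_M$ solves $\dot x_M=M(s)x_M$, $x_M(0)=x$. $\lambda(\mathcal M)$ is the unique real number for which there exists $\overline v:K\to\mathbb R_+$, homogeneous of degree 1, positive on $K_0$, globally Lipschitz, with $e^{\lambda(\mathcal M)t}\overline v(x)=\sup_{M\in L^\infty(0,t)}\overline v(x_M(t))$ for all $t\ge0$, $x\in K$. *)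

(* Defs.v *)
From HB Require Import structures.
From mathcomp Require Import all_boot all_order all_algebra.
From mathcomp Require Import all_classical all_reals.
From mathcomp Require Import ereal topology normedtype sequences exp measure
  lebesgue_measure lebesgue_integral.
From mathcomp Require Import complex.

Set Implicit Arguments.
Unset Strict Implicit.
Unset Printing Implicit Defensive.

Import Order.TTheory GRing.Theory Num.Theory.
Import numFieldNormedType.Exports.
Local Open Scope classical_set_scope.
Local Open Scope ring_scope.

Section Defs.
Variable R : realType.
Variable n : nat.

Definition metzler (m : 'M[R]_n) : Prop :=
  forall i j : 'I_n, i != j -> 0 <= m i j.

Definition irreducible_mx (m : 'M[R]_n) : Prop :=
  forall I : {set 'I_n}, I != finset.set0 -> ~: I != finset.set0 ->
    exists i j, [/\ i \in I, j \in ~: I & 0 < m i j].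

Definition convex_set (S : set 'M[R]_n) : Prop :=
  forall a b, S a -> S b -> forall l : R, 0 <= l <= 1 ->
    S (l *: a + (1 - l) *: b).

Definition orthant : set 'cV[R]_n := [set x | forall i, 0 <= x i 0].
Definition orthant0 : set 'cV[R]_n := [set x | orthant x /\ x != 0].

Definition perron_eigenvalue (m : 'M[R]_n) (l : R) : Prop :=
  root (char_poly m) l /\
  forall z : R[i], root (map_poly (real_complex R) (char_poly m)) z ->
    complex.Re z <= l.

Definition admissible_control (S : set 'M[R]_n) (t : R) (M : R -> 'M[R]_n)
  : Prop :=
  (forall s, 0 <= s <= t -> S (M s)) /\
  (forall i j, measurable_fun `[0, t] (fun s => M s i j)).

(* x solves x' = M(s) x, x(0) = x0 on [0,t] (Carathéodory sense:
   integral equation with Lebesgue integrable right-hand side). *)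
Definition ode_solution (M : R -> 'M[R]_n) (x0 : 'cV[R]_n) (t : R)
  (x : R -> 'cV[R]_n) : Prop :=
  forall s, 0 <= s <= t -> forall i : 'I_n,
    (lebesgue_measure).-integrable `[0, s]
        (fun r => ((M r *m x r) i 0)%:E) /\
    x s i 0 = x0 i 0 +
      fine (\int[lebesgue_measure]_(r in `[0, s]) ((M r *m x r) i 0)%:E).

Definition homogeneous1 (v : 'cV[R]_n -> R) : Prop :=
  forall (c : R) x, 0 <= c -> orthant x -> v (c *: x) = c * v x.

Definition lipschitz_on_orthant (v : 'cV[R]_n -> R) : Prop :=
  exists L : R, forall x y, orthant x -> orthant y ->
    `|v x - v y| <= L * \sum_i `|x i 0 - y i 0|.

Definition joint_eigenpair (S : set 'M[R]_n) (lam : R) (v : 'cV[R]_n -> R)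
  : Prop :=
  [/\ (forall x, orthant x -> 0 <= v x),
      (forall x, orthant0 x -> 0 < v x),
      homogeneous1 v,
      lipschitz_on_orthant v &
      forall (t : R) (x0 : 'cV[R]_n), 0 <= t -> orthant x0 ->
        ((expR (lam * t) * v x0)%:E =
         ereal_sup [set (v (x t))%:E | x in
                     [set x | exists M, admissible_control S t M /\
                                        ode_solution M x0 t x]])%E].

(* lambda(S) is the unique real lam admitting such a v. *)
Definition is_joint_lambda (S : set 'M[R]_n) (lam : R) : Prop :=
  exists v, joint_eigenpair S lam v.

End Defs.

(* Main.v *)
Require Import Defs.
From HB Require Import structures.
From mathcomp Require Import all_boot all_order all_algebra.
From mathcomp Require Import all_classical all_reals.
From mathcomp Require Import ereal topology normedtype sequences exp measure
  lebesgue_measure lebesgue_integral.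
From mathcomp Require Import derive realfun ftc.
From mathcomp Require Import polyrcf complex.
From mathcomp Require Import ring lra.

Import Order.TTheory GRing.Theory Num.Theory.
Import numFieldNormedType.Exports.
Local Open Scope classical_set_scope.
Local Open Scope ring_scope.

Set Implicit Arguments.
Unset Strict Implicit.

Section PF.
Variable R : realType.

Lemma map_cpm n (A : 'M[R]_n) t :
  map_mx (horner_eval t) (char_poly_mx A) = t%:M - A.
Proof.
apply/matrixP=> i j; rewrite !mxE /horner_eval !hornerE.
by rewrite hornerMn hornerX.
Qed.

Lemma charE n (A : 'M[R]_n) t : (char_poly A).[t] = \det (t%:M - A).
Proof. by rewrite -map_cpm det_map_mx. Qed.

Lemma row_split n (B : 'M[R]_n) (y : 'cV[R]_n) j :
  (B *m y) j 0 = B j j * y j 0 + \sum_(k | k != j) B j k * y k 0.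
Proof. by rewrite mxE (bigD1 j) //. Qed.

Lemma E1 n (A : 'M[R]_n) t :
  (t%:M - A) *m (\adj (t%:M - A) *m (const_mx 1 : 'cV[R]_n)) =
  (char_poly A).[t] *: (const_mx 1 : 'cV[R]_n).
Proof. by rewrite mulmxA mul_mx_adj charE mul_scalar_mx. Qed.

Definition Yp n (A : 'M[R]_n) (j : 'I_n) : {poly R} :=
  (\adj (char_poly_mx A) *m (const_mx 1 : 'cV[{poly R}]_n)) j 0.

Lemma Yp_eval n (A : 'M[R]_n) j t :
  (Yp A j).[t] = (\adj (t%:M - A) *m (const_mx 1 : 'cV[R]_n)) j 0.
Proof.
rewrite /Yp -map_cpm -map_mx_adj.
have -> : (const_mx 1 : 'cV[R]_n) = map_mx (horner_eval t) (const_mx 1).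
  by apply/matrixP=> i k; rewrite !mxE /horner_eval hornerC.
by rewrite -map_mxM [RHS]mxE.
Qed.


Lemma pos_char n (A : 'M[R]_n) :
  (forall t, 0 < t -> ~~ root (char_poly A) t) ->
  forall t, 0 < t -> 0 < (char_poly A).[t].
Proof.
move=> H t t0.
have Hn : {in `[t, +oo[, forall x, ~~ root (char_poly A) x}.
  move=> x; rewrite in_itv andbT /= => htx; apply: H; exact: lt_le_trans htx.
have := @sgp_pinftyP R t _ Hn t; rewrite in_itv /= lexx => /(_ isT).
by rewrite /sgp_pinfty (monicP (char_poly_monic A)) sgr1 => /eqP; rewrite sgr_cp0.
Qed.

Definition metz n (A : 'M[R]_n) := forall i j, i != j -> 0 <= A i j.

Lemma pos_of_nonneg n (A : 'M[R]_n) (y : 'cV[R]_n) t c :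
  metz A -> 0 < c -> (t%:M - A) *m y = c *: const_mx 1 ->
  (forall j, 0 <= y j 0) -> forall j, 0 < y j 0.
Proof.
move=> HA c0 E Y j; rewrite lt_def Y andbT; apply/eqP => yj0.
have := congr1 (fun M : 'cV[R]_n => M j 0) E; rewrite row_split yj0 mulr0 add0r !mxE mulr1.
have : \sum_(k | k != j) (t%:M - A) j k * y k 0 <= 0.
  apply: (big_ind (fun x => x <= 0)) => //; first by move=> x z; lra.
  move=> k kj; rewrite !mxE eq_sym (negbTE kj) mulr0n sub0r mulNr oppr_le0.
  by apply: mulr_ge0 => //; apply: HA; rewrite eq_sym.
lra.
Qed.

Lemma pos_large n (A : 'M[R]_n) (y : 'cV[R]_n) t c :
  metz A -> 0 < c -> (forall j, \sum_k `|A j k| < t) ->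
  (t%:M - A) *m y = c *: const_mx 1 -> forall j, 0 < y j 0.
Proof.
move=> HA c0 Ht E j.
case: (@arg_minP _ _ _ j xpredT (fun k => y k 0) isT) => jm _ Hm.
suff: 0 < y jm 0 by move=> h; apply: lt_le_trans h (Hm j isT).
have := congr1 (fun M : 'cV[R]_n => M jm 0) E; rewrite row_split !mxE eqxx mulr1n mulr1.
have Hb : \sum_(k | k != jm) (t%:M - A) jm k * y k 0 <=
          \sum_(k | k != jm) (- A jm k) * y jm 0.
  apply: ler_sum => k kj; rewrite !mxE eq_sym (negbTE kj) mulr0n sub0r.
  rewrite !mulNr lerN2; apply: ler_wpM2l; last exact: Hm.
  by apply: HA; rewrite eq_sym.
have Hs : \sum_k A jm k <= \sum_k `|A jm k| by apply: ler_sum => k _; exact: ler_norm.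
have := Ht jm; rewrite (bigD1 jm) //= in Hs; rewrite -mulr_suml sumrN in Hb.
move=> Htj Hc; rewrite ltNge; apply/negP => yle.
have : (t - (A jm jm + \sum_(k | k != jm) A jm k)) * y jm 0 <= 0.
  by apply: mulr_ge0_le0 => //; lra.
nra.
Qed.

Lemma cont_ge0_at0 (f : R -> R) : continuous f ->
  (forall t, 0 < t -> 0 <= f t) -> 0 <= f 0.
Proof.
move=> fc H; rewrite leNgt; apply/negP => f0.
have f1 := H 1 ltr01.
have [c cI fc2] : exists2 c, c \in `[0, 1] & f c = f 0 / 2.
  apply: IVT; first exact: ler01.
    by apply: continuous_subspaceT => x; exact: fc.
  by rewrite ge_min le_max; apply/andP; split; apply/orP; [left|right]; lra.
move: cI; rewrite in_itv /= => /andP[c0 _].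
move: c0; rewrite le_eqVlt => /orP[/eqP c0|c0].
  by move: fc2; rewrite -c0 => h; lra.
by have := H c c0; lra.
Qed.


Lemma cont_bigmin (I : Type) (r : seq I) (F : I -> R -> R) :
  (forall k, continuous (F k)) ->
  continuous (fun s => \big[Num.min/1]_(k <- r) F k s).
Proof.
move=> Fc; elim: r => [|a r IH].
  by under eq_fun do rewrite big_nil; exact: cst_continuous.
under eq_fun do rewrite big_cons.
move=> x; apply: (@continuous_min R R (F a) (fun s => \big[Num.min/1]_(k <- r) F k s) x).
  exact: Fc.
exact: IH.
Qed.

Lemma Y_pos n (A : 'M[R]_n) : metz A ->
  (forall t, 0 < t -> ~~ root (char_poly A) t) ->
  forall t j, 0 < t -> 0 < (Yp A j).[t].
Proof.
move=> HA Hr.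
pose T := 1 + \sum_j \sum_k `|A j k|.
have Hlarge : forall s, T <= s -> forall j, 0 < (Yp A j).[s].
  move=> s Ts j; rewrite Yp_eval.
  have s0 : 0 < s.
    apply: lt_le_trans Ts; rewrite /T.
    have : 0 <= \sum_j \sum_k `|A j k|.
      by apply: sumr_ge0 => i _; apply: sumr_ge0 => k _.
    lra.
  apply: (pos_large HA (pos_char Hr s0)) (E1 A s) j => i.
  apply: lt_le_trans Ts; rewrite /T [X in _ < 1 + X](bigD1 i) //=.
  have : 0 <= \sum_(i' | i' != i) \sum_k `|A i' k|.
    by apply: sumr_ge0 => i' _; apply: sumr_ge0 => k _.
  lra.
move=> t j t0; case: (leP T t) => [Tt|tT]; first exact: Hlarge.
pose f := fun s => \big[Num.min/1]_k (Yp A k).[s].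
have fc : continuous f.
  by apply: cont_bigmin => k; exact: continuous_horner.
have fT : 0 < f T.
  by apply: lt_bigmin => // k _; apply: Hlarge.
rewrite ltNge; apply/negP => Yle.
have ft : f t <= 0 by apply: le_trans Yle; apply: bigmin_le.
have [c cI fc0] : exists2 c, c \in `[t, T] & f c = 0.
  apply: IVT; first exact: ltW.
    by apply: continuous_subspaceT => x; exact: fc.
  by rewrite ge_min le_max; apply/andP; split; apply/orP; [left|right]; lra.
move: cI; rewrite in_itv /= => /andP[tc _].
have c0 : 0 < c by apply: lt_le_trans tc.
have Hc : forall k, 0 < (Yp A k).[c].
  move=> k; rewrite Yp_eval; apply: (pos_of_nonneg HA (pos_char Hr c0) (E1 A c)).
  by move=> i; rewrite -Yp_eval -fc0; apply: bigmin_le.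
have : 0 < f c by apply: lt_bigmin => // k _; apply: Hc.
by rewrite fc0 ltxx.
Qed.


Lemma Zmat_nonsing n (B : 'M[R]_n) (z : 'cV[R]_n) (v : 'rV[R]_n) c :
  (forall i j, i != j -> B i j <= 0) -> 0 < c ->
  B *m z = c *: const_mx 1 -> (forall j, 0 <= z j 0) -> v *m B = 0 -> v = 0.
Proof.
move=> HB c0 Ez z0 Ev.
have bd : forall j, 0 < B j j.
  move=> j; have := congr1 (fun M : 'cV[R]_n => M j 0) Ez.
  rewrite row_split !mxE mulr1.
  have : \sum_(k | k != j) B j k * z k 0 <= 0.
    apply: (big_ind (fun x => x <= 0)) => //; first by move=> x y; lra.
    by move=> k kj; apply: mulr_le0_ge0 => //; apply: HB; rewrite eq_sym.
  move=> h1 h2; have h3 : 0 < B j j * z j 0 by lra.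
  rewrite ltNge; apply/negP => hb.
  have : B j j * z j 0 <= 0 by apply: mulr_le0_ge0.
  lra.
have col : forall j, \sum_i `|v 0 i| * B i j <= 0.
  move=> j; have := congr1 (fun M : 'rV[R]_n => M 0 j) Ev.
  rewrite !mxE (bigD1 j) //= => E0.
  have E1' : v 0 j * B j j = - \sum_(i | i != j) v 0 i * B i j by lra.
  have : `|v 0 j| * B j j <= \sum_(i | i != j) `|v 0 i| * - B i j.
    rewrite -(gtr0_norm (bd j)) -normrM E1' normrN.
    apply: le_trans (ler_norm_sum _ _ _) _; apply: ler_sum => i ij.
    by rewrite normrM (ler0_norm (HB _ _ ij)).
  move=> h; rewrite (bigD1 j) //=.
  have : \sum_(i | i != j) `|v 0 i| * - B i j = - \sum_(i | i != j) `|v 0 i| * B i j.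
    by rewrite -sumrN; apply: eq_bigr => i _; rewrite mulrN.
  lra.
have tot : \sum_j (\sum_i `|v 0 i| * B i j) * z j 0 <= 0.
  apply: (big_ind (fun x => x <= 0)) => //; first by move=> x y; lra.
  by move=> j _; apply: mulr_le0_ge0.
have eq : \sum_j (\sum_i `|v 0 i| * B i j) * z j 0 = c * \sum_i `|v 0 i|.
  under eq_bigr do rewrite mulr_suml.
  rewrite exchange_big /= mulr_sumr; apply: eq_bigr => i _.
  have := congr1 (fun M : 'cV[R]_n => M i 0) Ez; rewrite !mxE mulr1 => <-.
  by rewrite mulr_suml; apply: eq_bigr => j _; rewrite -mulrA mulrC.
have s0 : \sum_i `|v 0 i| <= 0.
  rewrite eq in tot; rewrite -(pmulr_rle0 _ c0); exact: tot.
have s00 : \sum_i `|v 0 i| = 0.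
  by apply/eqP; rewrite eq_le s0 sumr_ge0.
apply/rowP => i; rewrite mxE; apply/eqP; rewrite -normr_eq0; apply/eqP.
by move/psumr_eq0P : s00 => ->.
Qed.


Lemma ord1_0 (l : 'I_1) : l = 0.
Proof. exact: ord1. Qed.

Lemma PF0 n (A : 'M[R]_n) : metz A -> root (char_poly A) 0 ->
  (forall t, 0 < t -> ~~ root (char_poly A) t) ->
  exists x : 'cV[R]_n, [/\ (forall i, 0 <= x i 0), x != 0 & A *m x = 0].
Proof.
move=> HA r0 Hr.
case: n A HA r0 Hr => [|n] A HA r0 Hr.
  by move: r0; rewrite /char_poly det_mx00 rootE hornerC oner_eq0.
have Ypos := Y_pos HA Hr.
pose P k := [exists j, (Yp A j)`_k != 0].
have exk : exists k, P k.
  have h := Ypos 1 ord0 ltr01.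
  have : Yp A ord0 != 0 by apply: contraTneq h => ->; rewrite horner0 ltxx.
  move=> /eqP nz.
  case: (boolP [exists k : 'I_(size (Yp A ord0)), (Yp A ord0)`_k != 0]).
    by move=> /existsP[k hk]; exists k; apply/existsP; exists ord0.
  move=> /existsPn hall; exfalso; apply: nz; apply/polyP => i; rewrite coef0.
  case: (ltnP i (size (Yp A ord0))) => hi; last exact: nth_default.
  by have := hall (Ordinal hi); rewrite negbK => /eqP.
case: (ex_minnP exk) => k Pk kmin.
have Htake : forall j, take_poly k (Yp A j) = 0.
  move=> j; apply/polyP => i; rewrite coef_take_poly coef0.
  case: ifP => // ik; apply/eqP; apply: contraT => h.
  have := kmin i (introT existsP (ex_intro _ j h)).
  by rewrite leqNgt ik.
pose Z j := drop_poly k (Yp A j).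
have HZ : forall j, Yp A j = Z j * 'X^k.
  by move=> j; rewrite -{1}(poly_take_drop k (Yp A j)) Htake add0r.
have HZev : forall j s, (Yp A j).[s] = (Z j).[s] * s ^+ k.
  by move=> j s; rewrite {1}HZ hornerM hornerXn.
pose z := \col_j (Z j).[0].
have zpos : forall j, 0 <= z j 0.
  move=> j; rewrite mxE; apply: cont_ge0_at0; first exact: continuous_horner.
  move=> s s0; have := Ypos s j s0; rewrite HZev pmulr_lgt0 ?exprn_gt0 //.
  exact: ltW.
have znz : z != 0.
  move/existsP: Pk => [j hj]; apply/negP => /eqP hz.
  have := congr1 (fun M : 'cV[R]_n.+1 => M j 0) hz.
  by rewrite !mxE horner_coef0 coef_drop_poly add0n => h; rewrite h eqxx in hj.
pose W i := \sum_j (('X *+ (i == j)) - (A i j)%:P) * Z j.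
have HW : forall i s, (W i).[s] = ((s%:M - A) *m \col_j (Z j).[s]) i 0.
  move=> i s; rewrite /W horner_sum mxE; apply: eq_bigr => j _.
  by rewrite hornerM hornerD hornerN hornerMn hornerX hornerC !mxE.
have HWp : forall i s, (W i).[s] * s ^+ k = (char_poly A).[s].
  move=> i s.
  have : \adj (s%:M - A) *m const_mx 1 = s ^+ k *: \col_j (Z j).[s].
    by apply/matrixP => j l; rewrite (ord1_0 l) [RHS]mxE [X in _ = _ * X]mxE -Yp_eval HZev mulrC.
  move=> hY; have h := congr1 (fun M : 'cV[R]_n.+1 => M i 0) (E1 A s).
  rewrite /= hY -scalemxAr in h.
  have e : (s ^+ k *: ((s%:M - A) *m \col_j (Z j).[s])) i 0 =
     s ^+ k * ((s%:M - A) *m \col_j (Z j).[s]) i 0 by rewrite mxE.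
  have e2 : ((char_poly A).[s] *: (const_mx 1 : 'cV[R]_n.+1)) i 0 =
     (char_poly A).[s] by rewrite !mxE mulr1.
  by rewrite HW mulrC -e -e2.
have Wpos : forall i, 0 <= (W i).[0].
  move=> i; apply: cont_ge0_at0; first exact: continuous_horner.
  move=> s s0; have := pos_char Hr s0; rewrite -(HWp i s) pmulr_lgt0 ?exprn_gt0 //.
  exact: ltW.
have Weq : forall i, (W i).[0] = (W ord0).[0].
  move=> i.
  have hs : forall s, 0 < s -> (W i).[s] = (W ord0).[s].
    move=> s s0; apply: (mulIf (expf_neq0 k (lt0r_neq0 s0))).
    by rewrite !HWp.
  apply/eqP; rewrite eq_le; apply/andP; split; rewrite -subr_ge0 -hornerN -hornerD.
    apply: cont_ge0_at0; first exact: continuous_horner.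
    by move=> s s0; rewrite hornerD hornerN hs // subrr.
  apply: cont_ge0_at0; first exact: continuous_horner.
  by move=> s s0; rewrite hornerD hornerN hs // subrr.
set c := (W ord0).[0] in Weq.
have HAz : forall i, (A *m z) i 0 = - c.
  move=> i; rewrite -(Weq i) HW.
  have -> : \col_j (Z j).[0] = z by [].
  by rewrite mulmxBl mul_scalar_mx scale0r sub0r [(- (A *m z)) i 0]mxE opprK.
have c0 : 0 <= c by apply: Wpos.
move: c0; rewrite le_eqVlt => /orP[/eqP c0|c0].
  exists z; split => //; apply/matrixP => i l; rewrite (ord1_0 l) HAz -c0 mxE.
  by rewrite oppr0.
exfalso.
have : \det (0%:M - A) == 0 by rewrite -charE; exact: r0.
move=> /det0P [v vnz vB].
apply: (negP vnz); apply/eqP.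
apply: (@Zmat_nonsing _ (0%:M - A) z v c) => //.
- by move=> i j ij; rewrite !mxE (negbTE ij) mulr0n sub0r oppr_le0; apply: HA.
- apply/matrixP => i l; rewrite (ord1_0 l) mulmxBl mul_scalar_mx scale0r sub0r.
  by rewrite [(- (A *m z)) i 0]mxE HAz opprK !mxE mulr1.
Qed.

End PF.

Section D.
Variable R : realType.
Lemma dexp (a c r : R) :
  derivable (fun x => c * expR (a * x)) r 1 /\
  (fun x => c * expR (a * x))^`()%classic r = c * (a * expR (a * r)).
Proof.
have hl : is_derive r 1 (fun x : R => a * x) a.
  have := @is_deriveZ R R R id a r 1 1 (is_derive_id _ _).
  by rewrite /GRing.scale /= mulr1.
have hc : derivable (expR \o (fun x : R => a * x)) r 1.
  apply/derivable1_diffP; apply: differentiable_comp.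
    by apply/derivable1_diffP; exact: (@ex_derive _ _ _ _ _ _ _ hl).
  by apply/derivable1_diffP; exact: derivable_expR.
have hv : (expR \o (fun x : R => a * x))^`()%classic r = a * expR (a * r).
  rewrite derive1_comp; last exact: derivable_expR.
    by rewrite derive1E (@derive_val _ _ _ _ _ _ _ (is_derive_expR (a * r))) derive1E (@derive_val _ _ _ _ _ _ _ hl) mulrC.
  exact: (@ex_derive _ _ _ _ _ _ _ hl).
split.
  exact: derivableZ.
rewrite derive1E (deriveZ c hc) -derive1E.
by rewrite -[in RHS]hv.
Qed.

Lemma cont_F (a c : R) : continuous (fun x : R => c * expR (a * x)).
Proof.
move=> r; apply: differentiable_continuous; apply/derivable1_diffP.
exact: (dexp a c r).1.
Qed.

Lemma cont_f (a c : R) : continuous (fun x : R => c * (a * expR (a * x))).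
Proof.
have -> : (fun x : R => c * (a * expR (a * x))) = (fun x => (c * a) * expR (a * x)).
  by apply: funext => x; rewrite mulrA.
exact: cont_F.
Qed.

Lemma int_exp (a c s : R) : 0 <= s ->
  lebesgue_measure.-integrable `[0, s] (fun r : R => (c * (a * expR (a * r)))%:E) /\
  (\int[lebesgue_measure]_(r in `[0%R, s]) (c * (a * expR (a * r)))%:E =
   (c * expR (a * s) - c)%:E)%E.
Proof.
move=> s0; split.
  apply: (@continuous_compact_integrable R (fun r => c * (a * expR (a * r)))).
    exact: segment_compact.
  by apply: continuous_subspaceT; exact: cont_f.
move: s0; rewrite le_eqVlt => /orP[/eqP s0|s0].
  rewrite -s0 mulr0 expR0 mulr1 subrr set_itv1; exact: integral_set1.
rewrite (@continuous_FTC2 R (fun r => c * (a * expR (a * r))) (fun x => c * expR (a * x))) //.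
- by rewrite mulr0 expR0 mulr1 EFinB.
- by apply: continuous_subspaceT; exact: cont_f.
- split.
  + by move=> x _; exact: (dexp a c x).1.
  + by apply: cvg_at_right_filter; exact: cont_F.
  + by apply: cvg_at_left_filter; exact: cont_F.
- by move=> x _; exact: (dexp a c x).2.
Qed.
End D.


Theorem proposition1 (R : realType) (n : nat) (S : set 'M[R]_n)
  (hcomp : compact S) (hconv : convex_set S)
  (hmetz : forall m, S m -> metzler m)
  (hirr : forall m, S m -> irreducible_mx m)
  (lamS : R) (hlam : is_joint_lambda S lamS) :
  forall m, S m -> forall lm : R, perron_eigenvalue m lm -> lm <= lamS.
Proof.
move=> m Sm lm [rlm dom].
have HA : metz (m - lm%:M).
  move=> i j ij; rewrite !mxE (negbTE ij) mulr0n subr0; exact: (hmetz m Sm i j ij).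
have shift : forall t, (char_poly (m - lm%:M)).[t] = (char_poly m).[t + lm].
  move=> t; rewrite !charE; congr (\det _); apply/matrixP => i j; rewrite !mxE.
  by case: (i == j); rewrite /= ?mulr1n ?mulr0n; lra.
have r0 : root (char_poly (m - lm%:M)) 0 by rewrite rootE shift add0r.
have nr : forall t, 0 < t -> ~~ root (char_poly (m - lm%:M)) t.
  move=> t t0; apply/negP; rewrite rootE shift => h.
  have := dom (real_complex R (t + lm)).
  rewrite fmorph_root rootE h => /(_ isT) /=.
  lra.
have [x [xpos xnz Ax0]] := PF0 HA r0 nr.
have mx : m *m x = lm *: x.
  by apply/eqP; rewrite -subr_eq0 -mul_scalar_mx -mulmxBl Ax0.
case: hlam => v [vnn vpos vhom vlip vsup].
have hx : orthant x by [].
have Hs := vsup 1 x ler01 hx.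
pose traj := fun s : R => expR (lm * s) *: x.
have mem : [set (v (y 1))%:E | y in [set y | exists M,
    admissible_control S 1 M /\ ode_solution M x 1 y]] (v (traj 1))%:E.
  exists traj => //; exists (fun _ => m); split.
    by split => [s _|i j]; [exact: Sm| exact: measurable_cst].
  move=> s /andP[s0 _] i.
  have eqf : (fun r => ((m *m traj r) i 0)%:E) =
             (fun r => (x i 0 * (lm * expR (lm * r)))%:E).
    apply: funext => r; rewrite /traj -scalemxAr mx !mxE; congr (_%:E); ring.
  rewrite eqf; have [hi hint] := int_exp lm (x i 0) s0; split => //.
  rewrite hint /= /traj mxE; ring.
have := ereal_sup_ubound mem; rewrite -Hs /traj vhom ?expR_ge0 // !mulr1 lee_fin.
have vx : 0 < v x by apply: vpos.
by rewrite ler_pM2r // ler_expR.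
Qed.
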